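(* Let $R,T$ be finite disjoint sets with $R\ne\emptyset$ and $|R\sqcup T|\ge3$, and let $c$ be a metric cost function on $R\sqcup T$ which is injective on the edge set $E$ of the robot-task graph $G$ (i.e. $c(\{x,y\})\ne c(\{x',y'\})$ for distinct edges). Then $C(\textsc{Assign}(\mathcal{M}))\le 2\,C(\textsc{MinSum}(\mathcal{M}))$.
   Context: A metric cost function $c:(R\sqcup T)\times(R\sqcup T)\to\mathbb{R}_+$ satisfies $c(x,y)\ge0$, $c(x,y)=0$ iff $x=y$, $c(x,y)=c(y,x)$ and $c(x,z)\le c(x,y)+c(y,z)$. The robot-task graph $G$ has vertex set $R\sqcup T$, edge set $E$ consisting of all 2-element subsets of $R\sqcup T$, with edge cost $c(\{x,y\})=c(x,y)$. For a list $P=(v_0,\dots,v_n)$ of vertices, its cost is $C(P)=\sum_{i=0}^{n-1}c(v_i,v_{i+1})$ (and $0$ if $n=0$). A robot-route is such a list with $v_0\in R$ and $v_j\in T$ for $j\ge1$. A plan is a family of $|R|$ robot-routes whose vertex sets partition $R\sqcup T$; its cost is the sum of the costs of its routes. $\textsc{MinSum}(\mathcal{M})$ denotes a plan of minimum cost. $\textsc{Auction}(\mathcal{M})$: set $A=\emptyset$ and $a(r)=0$ for all $r\in R$. For $k=1,\dots,|T|$: let $w_k=\{s,t\}$ be the edge with $s\in R\cup A$, $t\in T\setminus A$ minimising $c(s,t)$ (unique by injectivity); set $a(t)=k$ and $A\leftarrow A\cup\{t\}$. Output the list $W=(w_1,\dots,w_{|T|})$ and the function $a:R\sqcup T\to\{0,\dots,|T|\}$.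 $\textsc{DFShortcut}$: the edges of $W$ form a forest each of whose components contains exactly one robot. For each robot $r$ let $V(r)$ be the vertex set of its component; start with $P(r)=(r)$ and, while $P(r)$ does not contain all of $V(r)$, scan the vertices of $P(r)$ from last to first, and at the first vertex $t$ having a neighbour (via an edge of $W$) not yet in $P(r)$, append the such neighbour $s$ with smallest $a(s)$. Output the plan $\{P(r):r\in R\}$. $\textsc{Assign}(\mathcal{M})$ is the plan obtained by applying $\textsc{DFShortcut}$ to the output $(W,a)$ of $\textsc{Auction}(\mathcal{M})$. *)

(* Defs.v *)
From mathcomp Require Import all_boot all_order all_algebra.
Set Implicit Arguments. Unset Strict Implicit. Unset Printing Implicit Defensive.
Import Order.TTheory GRing.Theory Num.Theory.
Local Open Scope ring_scope.

(* Vertex set R ⊔ T is a finType V; robots are the v with isR v, tasks the others. *)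
Section Defs.
Variables (V : finType) (isR : pred V) (K : realFieldType) (c : V -> V -> K).

Definition metric_cost : Prop :=
  [/\ forall x y, 0 <= c x y,
      forall x y, c x y = 0 <-> x = y,
      forall x y, c x y = c y x
    & forall x y z, c x z <= c x y + c y z].

Definition edge_injective : Prop :=
  forall x y x' y', x != y -> x' != y' -> c x y = c x' y' ->
    (x = x' /\ y = y') \/ (x = y' /\ y = x').

Fixpoint list_cost (s : seq V) : K :=
  match s with
  | x :: ((y :: _) as s') => c x y + list_cost s'
  | _ => 0
  end.

Definition robot_route (P : seq V) : Prop :=
  exists r ts, P = r :: ts /\ isR r /\ all (fun t => ~~ isR t) ts.

Definition is_plan (Q : V -> seq V) : Prop :=
  (forall r, isR r -> robot_route (Q r)) /\
  (forall v, exists r, [/\ isR r, v \in Q r &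
        forall r', isR r' -> v \in Q r' -> r' = r]).

Definition plan_cost (Q : V -> seq V) : K := \sum_(r | isR r) list_cost (Q r).

(* W is stored as a list of pairs (s,t), w_k = {s,t}; A = tasks in W. *)
Definition assigned (W : seq (V * V)) : seq V := map snd W.

Definition auction_cand (W : seq (V * V)) (p : V * V) : bool :=
  [&& (isR p.1 || (p.1 \in assigned W)), ~~ isR p.2 & p.2 \notin assigned W].

Definition auction_step (W : seq (V * V)) : seq (V * V) :=
  match [pick p | auction_cand W p &&
           [forall q, auction_cand W q ==> (c p.1 p.2 <= c q.1 q.2)]] with
  | Some p => rcons W p
  | None => W
  end.

Definition auction_W : seq (V * V) := iter #|[pred v | ~~ isR v]| auction_step [::].

(* a(t) = k if t was assigned at step k; a = 0 on robots *)
Definition auction_a (v : V) : nat :=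
  if v \in assigned auction_W then (index v (assigned auction_W)).+1 else 0%N.

Definition Wadj (W : seq (V * V)) (x y : V) : bool := ((x, y) \in W) || ((y, x) \in W).

Definition dfs_step (W : seq (V * V)) (a : V -> nat) (r : V) (P : seq V) : seq V :=
  if [set v | connect (Wadj W) r v] \subset [set v in P] then P else
  match [seq t <- rev P | [exists s, Wadj W t s && (s \notin P)]] with
  | t :: _ =>
      match [pick s | [&& Wadj W t s, s \notin P &
              [forall s', (Wadj W t s' && (s' \notin P)) ==> (a s <= a s')%N]]] with
      | Some s => rcons P s
      | None => P
      end
  | [::] => P
  end.

Definition dfshortcut (W : seq (V * V)) (a : V -> nat) (r : V) : seq V :=
  iter #|V| (dfs_step W a r) [:: r].

Definition assign_plan : V -> seq V := dfshortcut auction_W auction_a.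

End Defs.

(* Main.v *)
Require Import Defs.
From mathcomp Require Import all_boot all_order all_algebra.
From mathcomp Require Import lra.
Set Implicit Arguments. Unset Strict Implicit. Unset Printing Implicit Defensive.
Import Order.TTheory GRing.Theory Num.Theory.
Local Open Scope ring_scope.

Section Aux.
Variable V : finType.

Inductive reach (F : seq (V * V)) (S : pred V) : V -> Prop :=
| reach0 v : S v -> reach F S v
| reachS v w : ~~ S v -> Wadj F v w -> reach F S w -> reach F S v.

Lemma reach_gen F G S S' v : reach F S v ->
  (forall a b, Wadj F a b -> Wadj G a b) ->
  (forall s, S s -> reach G S' s) -> reach G S' v.
Proof.
move=> H FG SS; elim: H => [u Su | u w nSu Fuw _ IH]; first exact: SS.
case Hu: (S' u); first exact: reach0.
by apply: (@reachS _ _ u w); [rewrite Hu | apply: FG | ].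
Qed.

Lemma Wadj_sym (F : seq (V * V)) a b : Wadj F a b = Wadj F b a.
Proof. by rewrite /Wadj orbC. Qed.

Lemma Wadj_rem (F : seq (V * V)) q a b : Wadj F a b -> (a, b) != q -> (b, a) != q ->
  Wadj (rem q F) a b.
Proof.
by rewrite /Wadj => /orP [H|H] n1 n2; apply/orP; [left|right]; apply: rem_mem.
Qed.

Lemma reach_cut (F : seq (V * V)) (S : pred V) x : reach F S x -> ~~ S x ->
  exists q y z, [/\ q \in F, (q = (y, z) \/ q = (z, y)), ~~ S y, S z &
     reach (rem q F) [pred u | S u || (u == x)] y].
Proof.
elim=> [u Su | u w nSu Fuw Rw IH] nS; first by rewrite Su in nS.
case Sw: (S w).
  move: Fuw; rewrite /Wadj => /orP [H|H].
    exists (u, w), u, w; split => //; [by left | by apply: reach0; rewrite /= eqxx orbT].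
  exists (w, u), u, w; split => //; [by right | by apply: reach0; rewrite /= eqxx orbT].
have [q [y [z [qF qyz nSy Sz Ry]]]] := IH (negbT Sw).
exists q, y, z; split => //.
apply: (reach_gen Ry) => // s /= /orP [Ss|/eqP ->]; first by apply: reach0; rewrite /= Ss.
case Hw: (S w || (w == u)); first exact: reach0.
apply: (@reachS _ _ w u); first by rewrite /= Hw.
  rewrite Wadj_sym; apply: Wadj_rem => //.
    by apply/eqP => E; case: qyz => E'; rewrite E' in E; case: E => E1 E2;
      [rewrite -E2 Sw in Sz | rewrite -E1 in Sz; rewrite Sz in nSu].
  by apply/eqP => E; case: qyz => E'; rewrite E' in E; case: E => E1 E2;
      [rewrite -E2 in Sz; rewrite Sz in nSu | rewrite -E1 Sw in Sz].
by apply: reach0; rewrite /= eqxx orbT.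
Qed.

Lemma reach_reroute (F : seq (V * V)) (S : pred V) (x : V) q y z v : (q = (y, z) \/ q = (z, y)) -> S z ->
  reach (rem q F) [pred u | S u || (u == x)] y -> reach F S v ->
  reach (rem q F) [pred u | S u || (u == x)] v.
Proof.
move=> qyz Sz Ry; elim=> [u Su | u w nSu Fuw _ IH].
  by apply: reach0; rewrite /= Su.
case Hu: (S u || (u == x)); first exact: reach0.
case: (eqVneq u y) => [->//|nuy].
apply: (@reachS _ _ u w); [by rewrite /= Hu | | exact: IH].
have nuz : u != z by apply/eqP => E; rewrite E Sz in nSu.
apply: Wadj_rem => //; apply/eqP => E; case: qyz => E'; rewrite E' in E;
  case: E => E1 E2; subst; rewrite ?eqxx in nuy nuz; done.
Qed.


Fixpoint pairs (s : seq V) : seq (V * V) :=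
  match s with
  | x :: ((y :: _) as s') => (x, y) :: pairs s'
  | _ => [::]
  end.

Lemma reach_pairs (x : V) (l : seq V) v : v \in x :: l -> reach (pairs (x :: l)) (pred1 x) v.
Proof.
elim: l x v => [|y l IH] x v.
  rewrite mem_seq1 => /eqP ->. by constructor 1; rewrite /= eqxx.
rewrite inE; case: (eqVneq v x) => [-> _|nvx /= Hv]; first by constructor 1; rewrite /= eqxx.
apply: (reach_gen (IH y v Hv)).
  by move=> a b; rewrite /Wadj !inE => /orP [->|->]; rewrite !orbT.
move=> s /= /eqP ->.
case: (eqVneq y x) => [->|nyx]; first by constructor 1; rewrite /= eqxx.
apply: (@reachS _ _ y x); first by rewrite /= nyx.
  by rewrite /Wadj !inE eqxx !orbT.
by constructor 1; rewrite /= eqxx.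
Qed.

Variables (K : realFieldType) (c : V -> V -> K).

Definition sumc (F : seq (V * V)) : K := \sum_(p <- F) c p.1 p.2.

Lemma list_cost_pairs s : list_cost c s = sumc (pairs s).
Proof.
rewrite /sumc; elim: s => [|x [|y l] IH]; rewrite ?big_nil //.
by rewrite /= big_cons -IH.
Qed.

End Aux.


Section Auc.
Variables (V : finType) (isR : pred V) (K : realFieldType) (c : V -> V -> K).
Hypothesis c0 : forall x y, 0 <= c x y.
Hypothesis csym : forall x y, c x y = c y x.

Lemma sumc_rcons (W : seq (V * V)) p : sumc c (rcons W p) = sumc c W + c p.1 p.2.
Proof. by rewrite /sumc -cats1 big_cat big_seq1. Qed.

Lemma sumc_rem (F : seq (V * V)) q : q \in F -> sumc c F = c q.1 q.2 + sumc c (rem q F).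
Proof. by move=> qF; rewrite /sumc (big_rem _ qF). Qed.

Lemma assigned_rcons (W : seq (V * V)) p : assigned (rcons W p) = rcons (assigned W) p.2.
Proof. by rewrite /assigned map_rcons. Qed.

Lemma auction_inv (F0 : seq (V * V)) : (forall v, reach F0 isR v) -> forall n,
  let W := iter n (auction_step isR c) [::] in
  [/\ forall p, p \in W -> (isR p.1 || (p.1 \in assigned W)) && ~~ isR p.2,
     exists rho : V -> V, (forall x, isR x -> rho x = x) /\ (forall p, p \in W -> rho p.1 = rho p.2)
   & exists F, sumc c W + sumc c F <= sumc c F0 /\
       forall v, reach F [pred u | isR u || (u \in assigned W)] v].
Proof.
move=> R0; elim=> [|n IH] /=.
  split => //; first by exists id.
  exists F0; split; first by rewrite /sumc big_nil add0r.
  move=> v; apply: (reach_gen (R0 v)) => // s Hs; constructor 1; by rewrite /= Hs.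
move: IH; set W := iter n _ _ => -[H1 [rho [rhoR rhoW]] [F [Fc FR]]].
rewrite /auction_step; case: pickP => [p /andP [/and3P [p1S p2R p2A] /forallP Hmin] | _];
  last by split => //; [exists rho | exists F].
have np12 : p.1 != p.2 by apply/eqP => E; rewrite -E in p2R p2A; rewrite (negPf p2R) (negPf p2A) in p1S.
split.
- move=> q; rewrite assigned_rcons mem_rcons inE => /orP [/eqP ->|qW].
    by rewrite p2R mem_rcons inE; case/orP: p1S => ->; rewrite ?orbT.
  by case/andP: (H1 q qW) => /orP [-> | Hq] -> //; rewrite mem_rcons inE Hq !orbT.
- exists (fun x => if x == p.2 then rho p.1 else rho x); split.
    by move=> x Rx; case: eqP => [E|_]; [rewrite -E Rx in p2R | exact: rhoR].
  move=> q; rewrite mem_rcons inE => /orP [/eqP ->|qW]; first by rewrite (negPf np12) eqxx.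
  have q2 : q.2 != p.2.
    apply/eqP => E; move: p2A; rewrite -E /assigned; by rewrite (map_f snd qW).
  have q1 : q.1 != p.2.
    apply/eqP => E; case/andP: (H1 q qW); rewrite E (negPf p2R) (negPf p2A); done.
  by rewrite (negPf q1) (negPf q2); apply: rhoW.
- have nS : ~~ [pred u | isR u || (u \in assigned W)] p.2 by rewrite /= negb_or p2R p2A.
  have [q [y [z [qF qyz nSy Sz Ry]]]] := reach_cut (FR p.2) nS.
  exists (rem q F); split.
    have Hc : c p.1 p.2 <= c z y.
      have := Hmin (z, y); rewrite /auction_cand /=.
      move: nSy Sz; rewrite /= negb_or => /andP [-> ->] ->; by move/implyP; apply.
    have Hq : c q.1 q.2 = c z y by case: qyz => ->; rewrite //= csym.
    move: Fc; rewrite sumc_rcons (sumc_rem qF) Hq; lra.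
  move=> v; apply: (reach_gen (reach_reroute qyz Sz Ry (FR v))) => // s /= Hs.
  constructor 1; rewrite /= assigned_rcons mem_rcons inE.
  by case/orP: Hs => [/orP [->|->]|->]; rewrite ?orbT.
Qed.

End Auc.


Section Dfs.
Variables (V : finType) (K : realFieldType) (c : V -> V -> K).
Hypothesis c0 : forall x y, 0 <= c x y.
Hypothesis cxx : forall x, c x x = 0.
Hypothesis csym : forall x y, c x y = c y x.
Hypothesis ctri : forall x y z, c x z <= c x y + c y z.

Lemma list_cost_ge0 s : 0 <= list_cost c s.
Proof. by elim: s => [|x [|y s] IH] //=; rewrite addr_ge0. Qed.

Lemma lc2 x y s : list_cost c [:: x, y & s] = c x y + list_cost c (y :: s).
Proof. by []. Qed.

Lemma list_cost_cat s1 x s2 :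
  list_cost c (s1 ++ x :: s2) = list_cost c (rcons s1 x) + list_cost c (x :: s2).
Proof.
elim: s1 => [|y [|z s1] IH]; first by rewrite add0r.
  by rewrite cat_cons cat0s lc2 /= addr0.
by rewrite cat_cons rcons_cons !lc2 -cat_cons IH addrA.
Qed.

Lemma list_cost_rcons x s v :
  list_cost c (rcons (x :: s) v) = list_cost c (x :: s) + c (last x s) v.
Proof.
elim: s x => [|y s IH] x; first by rewrite /= addr0 add0r.
by rewrite rcons_cons !lc2 IH addrA.
Qed.

Lemma chain_tri x s : c x (last x s) <= list_cost c (x :: s).
Proof.
elim: s x => [|y s IH] x; first by rewrite /= cxx.
rewrite lc2 /=.
apply: le_trans (ctri x y _) _; by rewrite lerD2l IH.
Qed.

Lemma sumc_sub (E L : seq (V * V)) : uniq E -> {subset E <= L} -> sumc c E <= sumc c L.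
Proof.
elim: L E => [|w L IH] E uE sub.
  by case: E uE sub => [|e E] // _ /(_ e); rewrite inE eqxx => /(_ isT).
rewrite /sumc big_cons -/(sumc c L) -/(sumc c E).
case wE: (w \in E).
  rewrite (sumc_rem c wE) lerD2l; apply: IH; first exact: rem_uniq.
  move=> x; rewrite (mem_rem_uniq _ uE) inE => /andP [nxw xE].
  by move: (sub x xE); rewrite inE (negPf nxw).
apply: le_trans (IH E uE _) _; last by rewrite lerDr.
move=> x xE; move: (sub x xE); rewrite inE => /orP [/eqP E'|//].
by rewrite -E' xE in wE.
Qed.

Lemma pop_lemma (p : pred V) (P s1 s2 : seq V) t rest : uniq P ->
  subseq (s1 ++ t :: s2) P -> [seq x <- rev P | p x] = t :: rest ->
  forall x, x \in s2 -> ~~ p x.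
Proof.
move=> uP sub Hf.
have uS : uniq (s1 ++ t :: s2) := subseq_uniq sub uP.
have ut : uniq (t :: rest) by rewrite -Hf filter_uniq // rev_uniq.
have pt : p t by have := mem_head t rest; rewrite -Hf mem_filter => /andP [].
set L := [seq x <- rev (s1 ++ t :: s2) | p x].
have subL : subseq L (t :: rest).
  rewrite -Hf subseq_filter filter_all /=.
  by apply: subseq_trans (filter_subseq _ _) _; rewrite subseq_rev.
have tL : t \in L by rewrite mem_filter pt mem_rev mem_cat mem_head orbT.
have hL : exists L', L = t :: L'.
  case: L subL tL => [|y L'] //= subL tL; case: eqP subL => [-> _|nyt subL]; first by exists L'.
  by move: ut => /andP [/negP []]; apply: (mem_subseq subL).
case: hL => L' EL.
have : [seq x <- rev s2 | p x] = [::].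
  move: EL; rewrite /L rev_cat rev_cons -cats1 -catA !filter_cat.
  case Hq: [seq x <- rev s2 | p x] => [//|y ys] /= [Ey _].
  have : y \in [seq x <- rev s2 | p x] by rewrite Hq mem_head.
  rewrite mem_filter mem_rev Ey => /andP [_ ts2].
  by move: uS; rewrite cat_uniq /= ts2 /= !andbF.
move=> Hnil x xs2; apply/negP => px.
have : x \in [seq x <- rev s2 | p x] by rewrite mem_filter px mem_rev.
by rewrite Hnil.
Qed.


Variables (W : seq (V * V)) (a : V -> nat) (r : V) (rho : V -> V).
Hypothesis hrho : forall x y, Wadj W x y -> rho x = rho y.
Hypothesis rhor : rho r = r.

Definition DInv (P : seq V) : Prop :=
  exists P' s E, P = r :: P' /\ uniq P /\ (forall x, x \in P -> rho x = r) /\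
    subseq s P /\ last r s = last r P /\
    (forall x, x \in P -> x \notin s -> ~~ [exists s0, Wadj W x s0 && (s0 \notin P)]) /\
    uniq E /\ {subset E <= W} /\ (forall e, e \in E -> (e.1 \in P) && (e.2 \in P)) /\
    list_cost c P + list_cost c s <= 2 * sumc c E.

Lemma DInv0 : DInv [:: r].
Proof.
exists [::], [:: r], [::]; do 2 (split => //).
split; first by move=> x; rewrite mem_seq1 => /eqP ->.
do 2 (split => //).
split; first by move=> x xr; rewrite xr.
do 3 (split => //).
by rewrite /sumc big_nil /= addr0 mulr0.
Qed.

Lemma DInv_step P : DInv P -> DInv (dfs_step W a r P).
Proof.
move=> [P' [s [E [EP [uP [rP [sP [ls [fin [uE [EW [EinP Hc]]]]]]]]]]]].
have Hinv : DInv P by exists P', s, E.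
rewrite /dfs_step; case: ifP => _; first exact: Hinv.
case Hf: [seq t <- rev P | [exists s, Wadj W t s && (s \notin P)]] => [|t rest]; first exact: Hinv.
case: pickP => [v /and3P [tv vP _] | _]; last exact: Hinv.
have : t \in [seq t <- rev P | [exists s, Wadj W t s && (s \notin P)]] by rewrite Hf mem_head.
rewrite mem_filter mem_rev => /andP [ut tP].
have ts : t \in s by apply/negPn/negP => nts; move: (fin t tP nts); rewrite ut.
case/splitPr: ts sP ls fin Hc => s1 s2 sP ls fin Hc.
have pop := pop_lemma uP sP Hf.
set e := if (t, v) \in W then (t, v) else (v, t).
have eW : e \in W by rewrite /e; case: ifP => // H; move: tv; rewrite /Wadj H.
have ce : c e.1 e.2 = c t v by rewrite /e; case: ifP => //= _; rewrite csym.
have ev : (e.1 == v) || (e.2 == v) by rewrite /e; case: ifP => _; rewrite eqxx ?orbT.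
have rv : rho v = r by rewrite -(hrho tv); apply: rP.
exists (rcons P' v), (rcons (rcons s1 t) v), (rcons E e).
split; first by rewrite EP.
split; first by rewrite rcons_uniq vP.
split; first by move=> x; rewrite mem_rcons inE => /orP [/eqP ->|/rP].
split.
  rewrite -!cats1 cat_subseq //; apply: subseq_trans sP.
  by rewrite cats1 -cat_rcons prefix_subseq.
split; first by rewrite !last_rcons.
split.
  move=> x xP1 xs1; move: xP1; rewrite mem_rcons inE; move/orP => [/eqP xv|xP].
    by move: xs1; rewrite xv !mem_rcons mem_head.
  move: xs1; rewrite !mem_rcons !inE negb_or; move/andP => [nxv].
  rewrite mem_rcons inE negb_or; move/andP => [nxt nxs1].
  apply/negP => /existsP [y /andP [xy ny]].
  have uxP : [exists s0, Wadj W x s0 && (s0 \notin P)].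
    by apply/existsP; exists y; rewrite xy; move: ny; rewrite mem_rcons inE negb_or => /andP [].
  case xs: (x \in s1 ++ t :: s2).
    move: xs; rewrite mem_cat (negPf nxs1) inE (negPf nxt) /= => xs2.
    by move: (pop x xs2); rewrite uxP.
  by move: (fin x xP (negbT xs)); rewrite uxP.
split.
  rewrite rcons_uniq uE andbT; apply/negP => eE.
  case/andP: (EinP e eE) => e1 e2.
  by case/orP: ev => /eqP H; [rewrite H in e1 | rewrite H in e2]; [rewrite e1 in vP | rewrite e2 in vP].
split; first by move=> x; rewrite mem_rcons inE => /orP [/eqP ->|/EW].
split.
  move=> x; rewrite mem_rcons inE => /orP [/eqP ->|/EinP /andP [x1 x2]].
    rewrite /e; case: ifP => _ /=; by rewrite !mem_rcons !inE eqxx tP !orbT.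
  by rewrite !mem_rcons !inE x1 x2 !orbT.
rewrite sumc_rcons ce EP list_cost_rcons -EP.
have -> : rcons (rcons s1 t) v = s1 ++ t :: [:: v] by rewrite -!cats1 -catA.
rewrite list_cost_cat.
move: Hc; rewrite list_cost_cat.
have h1 : c (last r P') v <= c (last r P') t + c t v := ctri _ _ _.
have h2 : c t (last t s2) <= list_cost c (t :: s2) := chain_tri t s2.
have h3 : last t s2 = last r P' by move: ls; rewrite last_cat EP.
rewrite h3 csym in h2.
have h4 : list_cost c [:: t; v] = c t v by rewrite /= addr0.
rewrite h4; move: h1 h2; lra.
Qed.

Lemma DInv_iter n : DInv (iter n (dfs_step W a r) [:: r]).
Proof. by elim: n => [|n IH]; [exact: DInv0 | rewrite iterS; apply: DInv_step]. Qed.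

Lemma dfs_bound : list_cost c (dfshortcut W a r) <= 2 * sumc c [seq p <- W | rho p.1 == r].
Proof.
have [P' [s [E [_ [_ [rP [_ [_ [_ [uE [EW [EinP Hc]]]]]]]]]]]] := DInv_iter #|V|.
rewrite /dfshortcut; apply: le_trans (_ : _ <= 2 * sumc c E) _.
  by apply: le_trans Hc; rewrite lerDl list_cost_ge0.
rewrite ler_pM2l //; apply: sumc_sub => // x xE.
rewrite mem_filter EW // andbT; case/andP: (EinP x xE) => x1 _.
by rewrite rP.
Qed.

End Dfs.


Lemma sumc_flatten (V : finType) (K : realFieldType) (c : V -> V -> K) (f : V -> seq (V * V)) (l : seq V) :
  sumc c (flatten [seq f r | r <- l]) = \sum_(r <- l) sumc c (f r).
Proof.
elim: l => [|x l IH]; first by rewrite /sumc !big_nil.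
by rewrite /= big_cons -IH /sumc big_cat.
Qed.

Theorem lemma5 (V : finType) (isR : pred V) (K : realFieldType) (c : V -> V -> K) :
  (exists r, isR r) -> (3 <= #|V|)%N ->
  metric_cost c -> edge_injective c ->
  forall Q : V -> seq V, is_plan isR Q ->
    plan_cost isR c (assign_plan isR c) <= 2 * plan_cost isR c Q.
Proof.
move=> _ _ [c0 ceq csym ctri] _ Q [Qroute Qcover].
have cxx : forall x, c x x = 0 by move=> x; apply/ceq.
set F0 := flatten [seq pairs (Q r) | r <- [seq x <- index_enum V | isR x]].
have F0c : sumc c F0 = plan_cost isR c Q.
  by rewrite /F0 sumc_flatten big_filter /plan_cost; apply: eq_bigr => r _; rewrite list_cost_pairs.
have F0R : forall v, reach F0 isR v.
  move=> v; have [r [Rr vQ _]] := Qcover v.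
  have [r0 [ts [Qr [Rr0 _]]]] := Qroute r Rr.
  rewrite Qr in vQ.
  apply: (reach_gen (reach_pairs vQ)).
    have sub : {subset pairs (Q r) <= F0}.
      move=> p pQ; apply/flattenP; exists (pairs (Q r)) => //.
      by apply: map_f; rewrite mem_filter Rr mem_index_enum.
    by move=> x y; rewrite /Wadj -Qr => /orP [/sub -> | /sub ->]; rewrite ?orbT.
  by move=> s /= /eqP ->; constructor 1.
have [_ [rho [rhoR rhoW]] [F [Fc _]]] := @auction_inv V isR K c csym F0 F0R #|[pred v | ~~ isR v]|.
set W := iter _ _ _ in rhoW Fc.
have WF0 : sumc c W <= sumc c F0.
  apply: le_trans Fc; rewrite lerDl /sumc; apply: sumr_ge0 => p _; exact: c0.
have hrho : forall x y, Wadj W x y -> rho x = rho y.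
  by move=> x y /orP [/rhoW | /rhoW] //= ->.
rewrite -F0c; apply: le_trans (_ : _ <= 2 * sumc c W) _; last by rewrite ler_pM2l.
rewrite /plan_cost /assign_plan.
apply: le_trans (_ : _ <= \sum_(r | isR r) 2 * \sum_(p <- W | rho p.1 == r) c p.1 p.2) _.
  apply: ler_sum => r Rr.
  rewrite -big_filter.
  exact: (dfs_bound c0 cxx csym ctri (auction_a isR c) hrho (rhoR r Rr)).
rewrite -mulr_sumr ler_pM2l // (exchange_big_dep xpredT) //=.
rewrite /sumc; apply: ler_sum => p _.
case Rp: (isR (rho p.1)).
  have HP : [pred x | isR x && (rho p.1 == x)] =1 pred1 (rho p.1).
    by move=> x /=; rewrite eq_sym; case: eqP => [->|_]; rewrite ?Rp ?andbF.
  by rewrite (big_pred1 (rho p.1) HP).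
have HP : [pred x | isR x && (rho p.1 == x)] =1 xpred0.
  by move=> x /=; case: eqP => [<-|_]; rewrite ?Rp ?andbF.
by rewrite (big_pred0 _ _ _ _ HP) c0.
Qed.
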